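(* Let $n\geq3$ and let $S_n$ act on $V=\mathbb{C}^n$ by its natural permutation representation. The subspace of $(H^{2,1}\oplus H^{2,0})^{S_n}$ consisting of elements supported only on the identity is one-dimensional, with basis $\sum_{1\leq i<j\leq n}(e_i-e_j)\otimes e_i^*\wedge e_j^*\otimes 1$.
   Context: $S_n$ acts by $\sigma e_i=e_{\sigma(i)}$; $e_i^*$ is the dual basis. For $g\in S_n$, let $V^g$ be its fixed space, $(V^g)^\perp$ its orthogonal complement (standard bilinear form), $c_g=\operatorname{codim}V^g$; identify $(V^g)^*$ with functionals vanishing on $(V^g)^\perp$ and $((V^g)^* )^\perp$ with functionals vanishing on $V^g$. Set $H^{2,d}_g=S^d(V^g)\otimes\bigwedge^{2-c_g}(V^g)^*\otimes\bigwedge^{c_g}((V^g)^* )^\perp\otimes\mathbb{C}g\subseteq S^d(V)\otimes\bigwedge^2V^*\otimes\mathbb{C}g$ (zero if $2-c_g<0$), and $H^{2,d}=\bigoplus_gH^{2,d}_g$, with $S_n$ acting diagonally ($h\cdot(f\otimes\omega\otimes g)=hf\otimes h\omega\otimes hgh^{-1}$). An element is supported only on the identity if all its components for $g\neq1$ vanish. (Note $H^{2,d}_1=S^d(V)\otimes\bigwedge^2V^*\otimes\mathbb{C}1$.) *)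

(* Defs.v *)
(* Scalars: algC (algebraic complex numbers, standing for C). *)
From HB Require Import structures.
From mathcomp Require Import all_boot all_order all_algebra all_fingroup all_field.

Set Implicit Arguments.
Unset Strict Implicit.
Unset Printing Implicit Defensive.

Import GRing.Theory Num.Theory.
Local Open Scope ring_scope.

(* V = C^n with basis e_i; a vector is its coordinate function.
   A functional alpha in V^* is recorded by alpha k = alpha(e_k).
   A bilinear form omega on V is recorded by omega k l = omega(e_k, e_l);
   Lambda^2 V^* is the space of alternating forms, with
   (alpha /\ beta)(u,v) = alpha(u) beta(v) - alpha(v) beta(u).
   An element of V (x) Lambda^2 V^* is recorded by t k l p = coefficient of
   e_k (x) (form with value at (e_l,e_p)). *)
Definition vec (n : nat) := 'I_n -> algC.
Definition form2 (n : nat) := 'I_n -> 'I_n -> algC.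
Definition ten (n : nat) := 'I_n -> 'I_n -> 'I_n -> algC.

Definition basis_vec (n : nat) (i : 'I_n) : vec n := fun k => (k == i)%:R.
Definition dual_basis (n : nat) (i : 'I_n) : vec n := fun k => (k == i)%:R.
Definition vsub (n : nat) (u v : vec n) : vec n := fun k => u k - v k.
Definition wedge (n : nat) (a b : vec n) : form2 n :=
  fun k l => a k * b l - a l * b k.
Definition tens (n : nat) (v : vec n) (w : form2 n) : ten n :=
  fun k l p => v k * w l p.

Definition bil (n : nat) (u v : vec n) : algC := \sum_(i < n) u i * v i.

(* S_n acts by sigma e_i = e_{sigma i}, i.e. (sigma v)(sigma i) = v i. *)
Definition fixed (n : nat) (g : 'S_n) (v : vec n) : Prop :=
  forall i, v (g i) = v i.
Definition fixperp (n : nat) (g : 'S_n) (u : vec n) : Prop :=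
  forall v, fixed g v -> bil u v = 0.
(* (V^g)^* = functionals vanishing on (V^g)^perp *)
Definition fixdual (n : nat) (g : 'S_n) (a : vec n) : Prop :=
  forall u, fixperp g u -> bil a u = 0.
(* ((V^g)^* )^perp = functionals vanishing on V^g *)
Definition fixdualperp (n : nat) (g : 'S_n) (a : vec n) : Prop :=
  forall v, fixed g v -> bil a v = 0.

(* c_g = codim V^g; V^g is the row kernel of (perm_mx g - 1)
   (row vectors: e_i *m perm_mx g = e_(g i)). *)
Definition codim_fix (n : nat) (g : 'S_n) : nat :=
  (n - \rank (kermx (perm_mx g - 1%:M : 'M[algC]_n)))%N.

(* Pure generators of Lambda^{2-c}(V^g)^* (x) Lambda^c ((V^g)^* )^perp
   inside Lambda^2 V^*: a /\ b with the 2-c first factors in (V^g)^* and the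
   c last ones in ((V^g)^* )^perp; no generator (zero space) if c > 2. *)
Definition wedge_ok (n : nat) (g : 'S_n) (a b : vec n) : Prop :=
  match codim_fix g with
  | 0 => fixdual g a /\ fixdual g b
  | 1 => fixdual g a /\ fixdualperp g b
  | 2 => fixdualperp g a /\ fixdualperp g b
  | _ => False
  end.

(* H^{2,1}_g = S^1(V^g) (x) Lambda^{2-c_g}(V^g)^* (x) Lambda^{c_g}((V^g)^* )^perp,
   as a subspace of V (x) Lambda^2 V^*: the span of the pure tensors. *)
Definition inH21g (n : nat) (g : 'S_n) (t : ten n) : Prop :=
  exists (m : nat) (v a b : 'I_m -> vec n),
    (forall r, fixed g (v r) /\ wedge_ok g (a r) (b r)) /\
    forall k l p, t k l p = \sum_(r < m) tens (v r) (wedge (a r) (b r)) k l p.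

(* H^{2,0}_g = S^0(V^g) (x) ... , as a subspace of Lambda^2 V^*. *)
Definition inH20g (n : nat) (g : 'S_n) (t : form2 n) : Prop :=
  exists (m : nat) (a b : 'I_m -> vec n),
    (forall r, wedge_ok g (a r) (b r)) /\
    forall k l, t k l = \sum_(r < m) wedge (a r) (b r) k l.

(* Elements of the ambient spaces  (+)_g S^d(V) (x) Lambda^2 V^* (x) C g
   are functions g |-> component at g. *)
Definition amb21 (n : nat) := 'S_n -> ten n.
Definition amb20 (n : nat) := 'S_n -> form2 n.

(* Diagonal action h.(f (x) w (x) g) = hf (x) hw (x) hgh^{-1};
   the paper's h g h^{-1} (function composition) is (h^-1 * g * h)%g in
   MathComp, where (s * t) x = t (s x).  Invariance: x(hgh^-1) = h.(x g),
   and (h.t)(k,l,p) = t(h^-1 k, h^-1 l, h^-1 p). *)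
Definition inv21 (n : nat) (x : amb21 n) : Prop :=
  forall (h g : 'S_n) k l p,
    x (h^-1 * g * h)%g k l p = x g ((h^-1)%g k) ((h^-1)%g l) ((h^-1)%g p).
Definition inv20 (n : nat) (x : amb20 n) : Prop :=
  forall (h g : 'S_n) k l,
    x (h^-1 * g * h)%g k l = x g ((h^-1)%g k) ((h^-1)%g l).

Definition id_supported_invariant (n : nat) (x1 : amb21 n) (x0 : amb20 n) : Prop :=
  [/\ forall g, inH21g g (x1 g),
      forall g, inH20g g (x0 g),
      inv21 x1, inv20 x0 &
      forall g : 'S_n, g != 1%g ->
        (forall k l p, x1 g k l p = 0) /\ (forall k l, x0 g k l = 0)].

Definition w21 (n : nat) : amb21 n :=
  fun g k l p =>
    if g == 1%g then
      \sum_(i < n) \sum_(j < n | (i < j)%N)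
         tens (vsub (basis_vec i) (basis_vec j))
              (wedge (dual_basis i) (dual_basis j)) k l p
    else 0.
Definition w20 (n : nat) : amb20 n := fun _ _ _ => 0.

(* Main.v *)
Require Import Defs.
From HB Require Import structures.
From mathcomp Require Import all_boot all_order all_algebra all_fingroup all_field.
From mathcomp Require Import ring.
Import GRing.Theory Num.Theory.
Local Open Scope ring_scope.

Section Aux.
Variable n : nat.

Lemma sum_delta (F : 'I_n -> algC) l : \sum_i (l == i)%:R * F i = F l.
Proof.
rewrite (bigD1 l) //= eqxx mul1r big1 ?addr0 // => i ne.
by rewrite eq_sym (negPf ne) mul0r.
Qed.

Lemma sum_delta_lt (F : 'I_n -> algC) (i p : 'I_n) :
  \sum_(j : 'I_n | (i < j)%N) (p == j)%:R * F j = (i < p)%:R * F p.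
Proof.
rewrite big_mkcond /=.
transitivity (\sum_(j : 'I_n) (p == j)%:R * ((i < j)%:R * F j)); last by rewrite sum_delta.
apply eq_bigr => j _; case: (i < j)%N => /=; by rewrite ?mul1r ?mul0r ?mulr0.
Qed.

Lemma S2 (F : 'I_n -> 'I_n -> algC) (l p : 'I_n) :
  \sum_(i : 'I_n) \sum_(j : 'I_n | (i < j)%N) (l == i)%:R * ((p == j)%:R * F i j)
  = (l < p)%:R * F l p.
Proof.
under eq_bigr => i _ do rewrite -mulr_sumr (sum_delta_lt (F i)).
exact: (sum_delta (fun i => (i < p)%:R * F i p)).
Qed.

Lemma w21E g k l p : @w21 n g k l p =
  if g == 1%g then (k == l)%:R - (k == p)%:R else 0.
Proof.
rewrite /w21; case: eqP => // _.
transitivity (\sum_(i : 'I_n) \sum_(j : 'I_n | (i < j)%N)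
  ((l == i)%:R * ((p == j)%:R * ((k == i)%:R - (k == j)%:R)) -
   (p == i)%:R * ((l == j)%:R * ((k == i)%:R - (k == j)%:R)) : algC)).
  apply eq_bigr => i _; apply eq_bigr => j _.
  rewrite /tens /vsub /basis_vec /wedge /dual_basis; ring.
under eq_bigr => i _ do rewrite sumrB.
rewrite sumrB (S2 (fun i j => (k == i)%:R - (k == j)%:R))
  (S2 (fun i j => (k == i)%:R - (k == j)%:R)) /=.
case: (ltngtP l p) => h.
- by rewrite mul1r mul0r subr0.
- by rewrite mul1r mul0r sub0r opprB.
- have e : l = p := val_inj h.
  rewrite e subrr; by rewrite ?mulr0 ?subrr.
Qed.

Lemma self_opp (x : algC) : x = - x -> x = 0.
Proof.
move=> h; apply/eqP.
have : x *+ 2 == 0 by rewrite mulr2n {2}h subrr.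
by rewrite mulrn_eq0.
Qed.

Lemma perm2 (k p q0 q1 : 'I_n) : k != p -> q0 != q1 ->
  exists s : 'S_n, s k = q0 /\ s p = q1.
Proof.
move=> kp q01.
pose t := tperm k q0. pose u := tperm (t p) q1.
exists (t * u)%g; rewrite !permM /u /t tpermL; split; last by rewrite tpermL.
apply: tpermD; last by rewrite eq_sym.
have : tperm k q0 p != tperm k q0 k by rewrite (inj_eq perm_inj) eq_sym.
by rewrite tpermL.
Qed.

Lemma inv1 (x1 : amb21 n) : inv21 x1 ->
  forall (s : 'S_n) k l p, x1 1%g (s k) (s l) (s p) = x1 1%g k l p.
Proof.
move=> H s k l p; have := H s 1%g (s k) (s l) (s p).
by rewrite mulg1 mulVg !permK.
Qed.

Lemma inv0 (x0 : amb20 n) : inv20 x0 ->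
  forall (s : 'S_n) k l, x0 1%g (s k) (s l) = x0 1%g k l.
Proof.
move=> H s k l; have := H s 1%g (s k) (s l).
by rewrite mulg1 mulVg !permK.
Qed.

Lemma H21_anti g (t : ten n) : inH21g g t -> forall k l p, t k l p = - t k p l.
Proof.
case=> m [v [a [b [_ E]]]] k l p.
rewrite !E -sumrN; apply eq_bigr => r _; rewrite /tens /wedge; ring.
Qed.

Lemma H20_anti g (t : form2 n) : inH20g g t -> forall k l, t k l = - t l k.
Proof.
case=> m [a [b [_ E]]] k l.
rewrite !E -sumrN; apply eq_bigr => r _; rewrite /wedge; ring.
Qed.

Lemma fixdual1 a : fixdual (1%g : 'S_n) a.
Proof.
move=> u hu.
have u0 : forall i, u i = 0.
  move=> i; have := hu (basis_vec i) (fun j => congr1 (basis_vec i) (perm1 j)).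
  rewrite /bil (bigD1 i) //= /basis_vec eqxx mulr1 big1 ?addr0 // => j ne.
  by rewrite (negPf ne) mulr0.
by rewrite /bil big1 // => i _; rewrite u0 mulr0.
Qed.

Lemma codim1 : codim_fix (1%g : 'S_n) = 0%N.
Proof.
by rewrite /codim_fix perm_mx1 subrr mxrank_ker mxrank0 subn0 subnn.
Qed.

Lemma wedge_ok1 a b : wedge_ok (1%g : 'S_n) a b.
Proof. by rewrite /wedge_ok codim1; split; apply: fixdual1. Qed.

Lemma inH21_w : inH21g (1%g : 'S_n) (@w21 n 1%g).
Proof.
exists n, (@basis_vec n), (@dual_basis n), (fun _ _ => 1); split.
  by move=> r; split; [move=> i; rewrite perm1 | exact: wedge_ok1].
move=> k l p; rewrite w21E eqxx; symmetry.
transitivity (\sum_(r : 'I_n) ((k == r)%:R * (l == r)%:R - (k == r)%:R * (p == r)%:R : algC)).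
  apply eq_bigr => r _; rewrite /tens /basis_vec /wedge /dual_basis; ring.
by rewrite sumrB !sum_delta [l == k]eq_sym [p == k]eq_sym.
Qed.

End Aux.
Arguments H21_anti {n g t}.
Arguments H20_anti {n g t}.
Arguments inv1 {n x1}.
Arguments inv0 {n x0}.
Arguments perm2 {n k p q0 q1}.

Theorem lemma4p4 (n : nat) (hn : (3 <= n)%N) :
  [/\ id_supported_invariant (@w21 n) (@w20 n),
      (exists (g : 'S_n) k l p, @w21 n g k l p != 0) &
      forall (x1 : amb21 n) (x0 : amb20 n),
        id_supported_invariant x1 x0 ->
        exists c : algC,
          (forall g k l p, x1 g k l p = c * @w21 n g k l p) /\
          (forall g k l, x0 g k l = c * @w20 n g k l)].
Proof.
pose i0 : 'I_n := Ordinal (leq_trans (isT : (1 <= 3)%N) hn).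
pose i1 : 'I_n := Ordinal (leq_trans (isT : (2 <= 3)%N) hn).
have i01 : i0 != i1 by [].
split.
- split.
  + move=> g; case: (eqVneq g 1%g) => [->|ng]; first exact: inH21_w.
    exists 0%N, (fun _ _ => 0), (fun _ _ => 0), (fun _ _ => 0); split; first by case.
    by move=> k l p; rewrite big_ord0 w21E (negPf ng).
  + move=> g; exists 0%N, (fun _ _ => 0), (fun _ _ => 0); split; first by case.
    by move=> k l; rewrite big_ord0.
  + move=> h g k l p; rewrite !w21E.
    have -> : (h^-1 * g * h == 1)%g = (g == 1%g) by rewrite -mulgA -conjgE conjg_eq1.
    case: eqP => // _.
    by rewrite !(inj_eq (@perm_inj _ h^-1%g)).
  + by [].
  + by move=> g ng; split => *; rewrite ?w21E ?(negPf ng).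
- exists 1%g, i0, i0, i1; rewrite w21E !eqxx.
  by rewrite (negPf i01) subr0 oner_neq0.
- move=> x1 x0 [H1 H0 I1 I0 S].
  exists (x1 1%g i0 i0 i1); split.
  + move=> g k l p; rewrite w21E.
    case: (eqVneq g 1%g) => [->|ng]; last by rewrite (S g ng).1 mulr0.
    rewrite ?eqxx.
    have A := H21_anti (H1 1%g). have P := inv1 I1.
    case: (eqVneq l p) => [<-|nlp].
      by rewrite subrr mulr0; apply: self_opp; exact: A.
    case: (eqVneq k l) => [?|nkl].
      subst l; rewrite ?eqxx ?(negPf nlp) /= subr0 mulr1.
      have [s [s1 s2]] := perm2 nlp i01.
      by rewrite -(P s) s1 s2.
    case: (eqVneq k p) => [?|nkp].
      subst p; rewrite ?(negPf nkl) ?eqxx sub0r mulrN1 A.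
      have [s [s1 s2]] := perm2 nkl i01.
      by rewrite -(P s) s1 s2.
    rewrite ?(negPf nkl) ?(negPf nkp) subrr mulr0.
    apply: self_opp.
    rewrite {1}A -(P (tperm l p) k p l) tpermL tpermR tpermD // eq_sym //.
  + move=> g k l; rewrite /w20 mulr0.
    case: (eqVneq g 1%g) => [->|ng]; last by rewrite (S g ng).2.
    have A := H20_anti (H0 1%g). have P := inv0 I0.
    case: (eqVneq k l) => [<-|nkl]; apply: self_opp; first exact: A.
    by rewrite {1}A -(P (tperm k l) l k) tpermL tpermR.
Qed.
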